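(* Let $K\ge2$, $0<q<p$ with $p+(K-1)q=1$. Each of the four estimators $\mathrm{Inv}$, $\mathrm{InvP}$, $\mathrm{InvN}$, $\mathrm{MLE}^*$ is consistent: for every $\theta\in\Delta$, if $\hat\theta$ denotes any of them, $\hat\theta(\phi^{(N)})\to\theta$ in probability as $N\to\infty$. Moreover, for $\hat\theta\in\{\mathrm{Inv},\mathrm{InvP}\}$, the mean squared error satisfies $\mathbb{E}\|\hat\theta(\phi^{(N)})-\theta\|_2^2=O(K/N)$, i.e. there is a constant $C$ depending only on $p,q$ such that $\mathbb{E}\|\hat\theta(\phi^{(N)})-\theta\|_2^2\le CK/N$ for all $\theta\in\Delta$ and $N\ge1$.
   Context: $\Delta=\{\theta\in\mathbb{R}^K:\theta_i\ge0,\sum_i\theta_i=1\}$. Randomized response: on input $x\in\{1,\dots,K\}$, outputs $y$ with probability $p$ if $y=x$, $q$ otherwise. For $\theta\in\Delta$, let $X_1,X_2,\dots$ be i.i.d. with distribution $\theta$, $Y_u$ the output of randomized response on $X_u$ (independent randomness), and $\phi^{(N)}$ the empirical histogram of $Y_1,\dots,Y_N$: $\phi^{(N)}_y=\frac1N|\{u\le N:Y_u=y\}|$. Estimators: $\mathrm{Inv}(\phi)_i=\frac{\phi_i-q}{p-q}$; $\mathrm{InvN}(\phi)_i=\frac{\max(0,\mathrm{Inv}(\phi)_i)}{\sum_j\max(0,\mathrm{Inv}(\phi)_j)}$; $\mathrm{InvP}(\phi)=\arg\min_{\theta'\in\Delta}\|\theta'-\mathrm{Inv}(\phi)\|_2$.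 $\mathrm{MLE}^*(\phi)$: for real $\tau$ let $m(\tau)=|\{i:\phi_i<\tau\}|$, $c_\tau=\frac{1-m(\tau)q}{\sum_{i:\phi_i\ge\tau}\phi_i}$; let $\tau^*$ be the smallest $\tau\in\{\phi_1,\dots,\phi_K\}$ with $c_\tau\phi_i\ge q$ for all $i$ with $\phi_i\ge\tau$; $\mathrm{MLE}^*(\phi)_i=0$ if $\phi_i<\tau^*$ and $\frac{c_{\tau^*}\phi_i-q}{p-q}$ otherwise. *)

(* Defs.v *)
From HB Require Import structures.
From mathcomp Require Import all_boot all_order all_algebra.
From mathcomp Require Import boolp classical_sets reals.
Set Implicit Arguments. Unset Strict Implicit. Unset Printing Implicit Defensive.
Import Order.TTheory GRing.Theory Num.Theory.
Local Open Scope ring_scope.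

Section RR.
Variables (R : realType) (K : nat) (p q : R).

Notation vec := {ffun 'I_K -> R}.

Definition simplex (t : vec) : Prop := (forall i, 0 <= t i) /\ \sum_i t i = 1.

Definition sqdist (a b : vec) : R := \sum_i (a i - b i) ^+ 2.
Definition dist2 (a b : vec) : R := Num.sqrt (sqdist a b).

Definition Inv (phi : vec) : vec := [ffun i => (phi i - q) / (p - q)].

Definition InvN (phi : vec) : vec :=
  [ffun i => Num.max 0 (Inv phi i) / \sum_j Num.max 0 (Inv phi j)].

Definition is_simplex_proj (v t : vec) : Prop :=
  simplex t /\ forall t', simplex t' -> sqdist t v <= sqdist t' v.
Definition InvP (phi : vec) : vec := xget (Inv phi) (is_simplex_proj (Inv phi)).

Definition mcount (phi : vec) (tau : R) : nat := #|[set i | phi i < tau]|.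
Definition ctau (phi : vec) (tau : R) : R :=
  (1 - (mcount phi tau)%:R * q) / \sum_(i | tau <= phi i) phi i.
Definition tau_ok (phi : vec) (tau : R) : bool :=
  [forall i, (tau <= phi i) ==> (q <= ctau phi tau * phi i)].
Definition tau_star (phi : vec) : R :=
  let s := [seq phi j | j <- enum 'I_K & tau_ok phi (phi j)] in
  foldr Num.min (head 0 s) s.
Definition MLEstar (phi : vec) : vec :=
  [ffun i => if phi i < tau_star phi then 0
             else (ctau phi (tau_star phi) * phi i - q) / (p - q)].

Definition rr (x y : 'I_K) : R := if x == y then p else q.

(* Outcomes of the first N rounds: w u = (X_u, Y_u). *)
Notation outc N := {ffun 'I_N -> 'I_K * 'I_K}.

Definition weight (theta : vec) N (w : outc N) : R :=
  \prod_(u < N) (theta (w u).1 * rr (w u).1 (w u).2).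

Definition hist N (w : outc N) : vec :=
  [ffun y => (#|[set u | (w u).2 == y]|)%:R / N%:R].

Definition Pr (theta : vec) N (A : pred (outc N)) : R :=
  \sum_(w | A w) weight theta w.
Definition Exp (theta : vec) N (f : outc N -> R) : R :=
  \sum_w weight theta w * f w.

Definition consistent (est : vec -> vec) : Prop :=
  forall theta : vec, simplex theta ->
  forall eps delta : R, 0 < eps -> 0 < delta ->
  exists N0 : nat, forall N : nat, (N0 <= N)%N ->
    Pr theta (fun w : outc N => eps < dist2 (est (hist w)) theta) <= delta.

Definition mse_bound (est : vec -> vec) : Prop :=
  exists C : R, forall theta : vec, simplex theta -> forall N : nat, (1 <= N)%N ->
    Exp theta (fun w : outc N => sqdist (est (hist w)) theta) <= C * K%:R / N%:R.

End RR.

(* Main.v *)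
Require Import Defs.
From HB Require Import structures.
From mathcomp Require Import all_boot all_order all_algebra.
From mathcomp Require Import boolp classical_sets reals.
From mathcomp Require Import ring lra.
Import Order.TTheory GRing.Theory Num.Theory.
Local Open Scope ring_scope.
Set Implicit Arguments. Unset Strict Implicit. Unset Printing Implicit Defensive.

Section Prob.
Variables (R : realType) (K : nat) (p q : R).
Hypotheses (HK : (2 <= K)%N) (Hq : 0 < q) (Hqp : q < p)
  (Hsum : p + (K - 1)%:R * q = 1).
Notation vec := {ffun 'I_K -> R}.
Local Ltac slra := have := Hq; have := Hqp; lra.
Local Ltac snra := have := Hq; have := Hqp; nra.

Lemma rrE (x y : 'I_K) : (@rr R K p q) x y = q + (if x == y then p - q else 0).
Proof. rewrite /rr; case: (x == y); slra. Qed.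

Lemma rr_ge0 x y : 0 <= (@rr R K p q) x y.
Proof. rewrite /rr; case: (x == y); slra. Qed.

Lemma rr_sum x : \sum_y (@rr R K p q) x y = 1.
Proof.
rewrite (bigD1 x) //= /rr eqxx.
rewrite (eq_bigr (fun _ => q)); last by move=> y /negbTE; rewrite eq_sym => ->.
by rewrite sumr_const cardC1 card_ord -Hsum subn1 mulr_natl.
Qed.

Definition mu (theta : vec) (z : 'I_K * 'I_K) := theta z.1 * (@rr R K p q) z.1 z.2.

Lemma mu_ge0 theta z : simplex theta -> 0 <= mu theta z.
Proof. by case=> h _; rewrite /mu mulr_ge0 ?rr_ge0. Qed.

Lemma mu_sum theta : simplex theta -> \sum_z mu theta z = 1.
Proof.
case=> _ h1; rewrite /mu -(pair_bigA _ (fun x y => theta x * (@rr R K p q) x y)) /=.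
by rewrite -h1; apply: eq_bigr => x _; rewrite -mulr_sumr rr_sum mulr1.
Qed.

Definition pi_ (theta : vec) i := q + theta i * (p - q).

Lemma mu_ind theta i : simplex theta ->
  \sum_z mu theta z * (if z.2 == i then 1 else 0) = pi_ theta i.
Proof.
case=> _ h1; rewrite /mu -(pair_bigA _ (fun x y => theta x * (@rr R K p q) x y * (if y == i then 1 else 0))) /=.
transitivity (\sum_x theta x * (@rr R K p q) x i).
  apply: eq_bigr => x _; rewrite (bigD1 i) //= eqxx mulr1 big1 ?addr0 //.
  by move=> y /negbTE ->; rewrite mulr0.
under eq_bigr do rewrite rrE mulrDr.
rewrite big_split /= -mulr_suml h1 mul1r (bigD1 i) //= eqxx big1 ?addr0 /pi_ //.
by move=> x /negbTE ->; rewrite mulr0.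
Qed.

Lemma weight_ge0 theta N (w : {ffun 'I_N -> 'I_K * 'I_K}) : simplex theta -> 0 <= weight p q theta w.
Proof. by move=> hs; rewrite /weight prodr_ge0 // => u _; apply: (mu_ge0 (w u) hs). Qed.

Lemma Exp_prod theta N (F : 'I_N -> 'I_K * 'I_K -> R) :
  Exp p q theta (fun w => \prod_u F u (w u)) = \prod_u \sum_z mu theta z * F u z.
Proof.
rewrite bigA_distr_bigA /Exp /weight; apply: eq_bigr => w _.
by rewrite -big_split.
Qed.

Lemma Exp_sum theta N (I : finType) (f : I -> {ffun 'I_N -> 'I_K * 'I_K} -> R) :
  Exp p q theta (fun w => \sum_i f i w) = \sum_i Exp p q theta (f i).
Proof. by rewrite /Exp exchange_big; apply: eq_bigr => w _; rewrite mulr_sumr. Qed.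

Lemma Exp_scale theta N c (f : {ffun 'I_N -> 'I_K * 'I_K} -> R) :
  Exp p q theta (fun w => c * f w) = c * Exp p q theta f.
Proof. by rewrite /Exp mulr_sumr; apply: eq_bigr => w _; rewrite mulrCA. Qed.

Lemma Exp_le theta N (f g : {ffun 'I_N -> 'I_K * 'I_K} -> R) : simplex theta ->
  (forall w, f w <= g w) -> Exp p q theta f <= Exp p q theta g.
Proof. by move=> hs h; rewrite /Exp ler_sum // => w _; rewrite ler_wpM2l ?weight_ge0. Qed.

Lemma Markov theta N (f : {ffun 'I_N -> 'I_K * 'I_K} -> R) a : simplex theta -> 0 < a ->
  (forall w, 0 <= f w) -> Pr p q theta (fun w => a < f w) <= Exp p q theta f / a.
Proof.
move=> hs ha hf; rewrite ler_pdivlMr // /Pr /Exp mulr_suml.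
rewrite [X in _ <= X](bigID (fun w => a < f w)) /=.
rewrite -[X in X <= _]addr0 lerD //; last first.
  by rewrite sumr_ge0 // => w _; rewrite mulr_ge0 ?weight_ge0.
by rewrite ler_sum // => w hw; rewrite ler_wpM2l ?weight_ge0 // ltW.
Qed.


Lemma simplex_le1 (theta : vec) i : simplex theta -> 0 <= theta i <= 1.
Proof.
case=> h0 h1; rewrite h0 /= -h1 (bigD1 i) //= lerDl sumr_ge0 //.
Qed.

Lemma pi_bounds theta i : simplex theta -> 0 <= pi_ theta i <= 1.
Proof.
move=> hs; have /andP[a b] := simplex_le1 i hs; rewrite /pi_.
have hp1 : p <= 1.
  rewrite -Hsum lerDl mulr_ge0 ?ler0n //; slra.
apply/andP; split; snra.
Qed.

Definition X (theta : vec) i (z : 'I_K * 'I_K) : R :=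
  (if z.2 == i then 1 else 0) - pi_ theta i.

Lemma X_mean theta i : simplex theta -> \sum_z mu theta z * X theta i z = 0.
Proof.
move=> hs; under eq_bigr do rewrite /X mulrBr.
by rewrite sumrB mu_ind // -mulr_suml mu_sum // mul1r subrr.
Qed.

Lemma X_var theta i : simplex theta -> 0 <= \sum_z mu theta z * X theta i z ^+ 2 <= 1.
Proof.
move=> hs; apply/andP; split.
  by rewrite sumr_ge0 // => z _; rewrite mulr_ge0 ?mu_ge0 ?sqr_ge0.
rewrite -(mu_sum hs) ler_sum // => z _.
rewrite ler_piMr ?mu_ge0 //.
have /andP[a b] := pi_bounds i hs.
rewrite /X; case: (z.2 == i); nra.
Qed.

Definition sX theta i := \sum_z mu theta z * X theta i z ^+ 2.

Lemma Exp_pair theta N i (u v : 'I_N) : simplex theta ->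
  Exp p q theta (fun w => X theta i (w u) * X theta i (w v)) =
  if u == v then sX theta i else 0.
Proof.
move=> hs; case: eqP => [<-|/eqP nuv].
  pose F := fun u' => if u' == u then fun z => X theta i z ^+ 2 else fun _ : 'I_K * 'I_K => 1 : R.
  transitivity (Exp p q theta (fun w => \prod_u' F u' (w u'))).
    rewrite /Exp; apply: eq_bigr => w _; congr (_ * _).
    by rewrite (bigD1 u) //= /F eqxx big1 ?mulr1 // => u' /negbTE ->.
  rewrite (Exp_prod theta F) (bigD1 u) //= /F eqxx [X in _ * X]big1 ?mulr1 //.
  by move=> u' /negbTE ->; under eq_bigr do rewrite mulr1; rewrite mu_sum.
pose F := fun u' => if u' == u then X theta i else if u' == v then X theta i else fun _ : 'I_K * 'I_K => 1 : R.
transitivity (Exp p q theta (fun w => \prod_u' F u' (w u'))).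
  rewrite /Exp; apply: eq_bigr => w _; congr (_ * _).
  have nvu : (v == u) = false by rewrite eq_sym (negbTE nuv).
  rewrite (bigD1 u) //= /F (eqxx u) (bigD1 v) //= nvu; case: (v == v) (eqxx v) => // _; rewrite big1 ?mulr1 //.
  by move=> u' /andP[/negbTE -> /negbTE ->].
by rewrite (Exp_prod theta F) (bigD1 u) //= /F eqxx X_mean // mul0r.
Qed.

Lemma Exp_sq theta N i : simplex theta ->
  Exp p q theta (fun w : {ffun 'I_N -> 'I_K * 'I_K} => (\sum_u X theta i (w u)) ^+ 2) = N%:R * sX theta i.
Proof.
move=> hs.
transitivity (Exp p q theta (fun w : {ffun 'I_N -> 'I_K * 'I_K} => \sum_u \sum_v X theta i (w u) * X theta i (w v))).
  by rewrite /Exp; apply: eq_bigr => w _; rewrite expr2 mulr_suml; congr (_ * _); apply: eq_bigr => u _; rewrite mulr_sumr.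
rewrite Exp_sum; under eq_bigr do rewrite Exp_sum.
under eq_bigr do under eq_bigr do rewrite Exp_pair //.
rewrite (eq_bigr (fun _ => sX theta i)); first by rewrite sumr_const card_ord mulr_natl.
move=> u _; rewrite (bigD1 u) //=; case: (u == u) (eqxx u) => // _.
rewrite big1 ?addr0 // => v; rewrite eq_sym; by case: (u == v).
Qed.


Lemma card_sum N (w : {ffun 'I_N -> 'I_K * 'I_K}) i :
  (#|[set u | (w u).2 == i]|)%:R = \sum_u (if (w u).2 == i then 1 else 0) :> R.
Proof. by rewrite -big_mkcond sumr_const cardsE. Qed.

Lemma hist_dev (theta : vec) N (w : {ffun 'I_N -> 'I_K * 'I_K}) i : (1 <= N)%N ->
  hist R w i - pi_ theta i = (\sum_u X theta i (w u)) / N%:R.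
Proof.
move=> hN; have hN0 : N%:R != 0 :> R by rewrite pnatr_eq0 -lt0n.
rewrite /hist ffunE card_sum /X sumrB sumr_const card_ord.
by rewrite -mulr_natr; field.
Qed.

Lemma Inv_dev (theta : vec) N (w : {ffun 'I_N -> 'I_K * 'I_K}) i : (1 <= N)%N ->
  Inv p q (hist R w) i - theta i = (\sum_u X theta i (w u)) / N%:R / (p - q).
Proof.
move=> hN; rewrite -hist_dev // /Inv ffunE /pi_.
have hpq : p - q != 0 by apply/eqP; slra.
by field.
Qed.

Lemma mse_Inv theta N : simplex theta -> (1 <= N)%N ->
  Exp p q theta (fun w : {ffun 'I_N -> 'I_K * 'I_K} => sqdist (Inv p q (hist R w)) theta)
  <= ((p - q) ^+ 2)^-1 * K%:R / N%:R.
Proof.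
move=> hs hN; have hN0 : 0 < N%:R :> R by rewrite ltr0n.
have hpq : 0 < p - q by slra.
have hpq0 : p - q != 0 by apply: lt0r_neq0.
have hN1 : N%:R != 0 :> R by apply: lt0r_neq0.
have -> : (fun w : {ffun 'I_N -> 'I_K * 'I_K} => sqdist (Inv p q (hist R w)) theta) =
  (fun w => \sum_i ((p - q) ^+ 2)^-1 / N%:R ^+ 2 * (\sum_u X theta i (w u)) ^+ 2).
  apply: funext => w; apply: eq_bigr => i _; rewrite Inv_dev //; field.
  by apply/andP; split.
rewrite Exp_sum; under eq_bigr do rewrite Exp_scale Exp_sq //.
rewrite (@le_trans _ _ (\sum_(i < K) ((p - q) ^+ 2)^-1 / N%:R)) //.
  apply: ler_sum => i _.
  have /andP[a b] := X_var i hs.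
  rewrite -/(sX theta i).
  rewrite [X in X <= _](_ : _ = ((p - q) ^+ 2)^-1 / N%:R * sX theta i); last first.
    by field; apply/andP; split.
  by rewrite ler_piMr // divr_ge0 // ?invr_ge0 ?sqr_ge0 // ltW.
by rewrite sumr_const card_ord -[_ *+ K]mulr_natr mulrAC.
Qed.

End Prob.

Section Proj.
Variables (R : realType) (K : nat).
Hypothesis (HK : (0 < K)%N).
Notation vec := {ffun 'I_K -> R}.

Lemma exists_argmax (I : finType) (P : pred I) (F : I -> R) i0 :
  P i0 -> exists j, P j /\ forall i, P i -> F i <= F j.
Proof. by move=> h; case: (arg_maxP F h) => j Pj Hj; exists j; split => // i /Hj. Qed.

Lemma exists_argmin (I : finType) (P : pred I) (F : I -> R) i0 :
  P i0 -> exists j, P j /\ forall i, P i -> F j <= F i.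
Proof. by move=> h; case: (arg_minP F h) => j Pj Hj; exists j; split => // i /Hj. Qed.

Definition lamS (v : vec) (S : {set 'I_K}) := (\sum_(i in S) v i - 1) / #|S|%:R.

Lemma sqdistC (a b : vec) : sqdist a b = sqdist b a.
Proof. by apply: eq_bigr => i _; rewrite -sqrrN opprB. Qed.

Lemma sqdist_dec (a t v : vec) :
  sqdist a v = sqdist a t + sqdist t v + 2 * \sum_i (a i - t i) * (t i - v i).
Proof.
rewrite /sqdist mulr_sumr -!big_split /=; apply: eq_bigr => i _; ring.
Qed.

Lemma sqdist_ge0 (a b : vec) : 0 <= sqdist a b.
Proof. by rewrite sumr_ge0 // => i _; rewrite sqr_ge0. Qed.

Lemma kkt_exists (v : vec) : exists t : vec, simplex t /\
  forall t', simplex t' -> 0 <= \sum_i (t' i - t i) * (t i - v i).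
Proof.
have i0 : 'I_K := Ordinal HK.
have hT : (0 < #|[set: 'I_K]|)%N by rewrite cardsT card_ord.
have [S0 [hS0 hmax]] := exists_argmax (P := fun S : {set 'I_K} => (0 < #|S|)%N) (lamS v) hT.
set lam := lamS v S0.
pose t : vec := [ffun i => Num.max 0 (v i - lam)].
have t0 i : 0 <= t i by rewrite ffunE le_max lexx.
have cS0 : 0 < #|S0|%:R :> R by rewrite ltr0n.
have sum_ge1 : 1 <= \sum_i t i.
  rewrite (bigID (mem S0)) /= -[1]addr0 lerD ?sumr_ge0 //.
  rewrite (@le_trans _ _ (\sum_(i in S0) (v i - lam))) //.
    rewrite sumrB sumr_const -mulr_natr /lam /lamS mulfVK ?lt0r_neq0 //.
    by rewrite opprB addrC subrK.
  by apply: ler_sum => i _; rewrite ffunE le_max lexx orbT.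
have tsum : \sum_i t i = 1.
  apply/eqP; rewrite eq_le sum_ge1 andbT.
  set S1 := [set i | lam < v i].
  have -> : \sum_i t i = \sum_(i in S1) (v i - lam).
    rewrite (bigID (mem S1)) /= [X in _ + X]big1 ?addr0.
      by apply: eq_bigr => i; rewrite inE ffunE => h; rewrite max_r // subr_ge0 ltW.
    by move=> i; rewrite inE ffunE -leNgt => h; rewrite max_l // subr_le0.
  case: (posnP #|S1|) => hS1.
    rewrite big_pred0 ?ler01 // => i; apply/negP => h.
    by move: hS1; apply/eqP; rewrite -lt0n; apply/card_gt0P; exists i.
  have := hmax S1 hS1; rewrite /lamS -/lam ler_pdivrMr ?ltr0n // => h.
  by rewrite sumrB sumr_const -mulr_natr lerBlDl addrC -lerBlDl.
exists t; split; first by split.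
move=> t' [t'0 t'1].
pose mu i := Num.max 0 (lam - v i).
have pw i : (t' i - t i) * (t i - v i) = - lam * t' i + lam * t i + t' i * mu i.
  rewrite /mu ffunE; case: (leP (v i) lam) => h.
  - rewrite (@max_l _ _ 0) ?subr_le0 // max_r ?subr_ge0 //; ring.
  - rewrite max_r ?subr_ge0 ?ltW // (@max_l _ _ 0) ?subr_le0 ?ltW //; ring.
rewrite (eq_bigr _ (fun i _ => pw i)) !big_split /= -!mulr_sumr t'1 tsum.
rewrite !mulr1 addNr add0r sumr_ge0 // => i _.
by rewrite mulr_ge0 // le_max lexx.
Qed.


Lemma proj_contract (v theta : vec) : simplex theta ->
  sqdist (xget v (is_simplex_proj v)) theta <= sqdist v theta.
Proof.
move=> sth.
have [t [ts kt]] := kkt_exists v.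
have tproj : is_simplex_proj v t.
  split=> // t' st'; rewrite (sqdist_dec t' t v).
  have := kt t' st'; have := sqdist_ge0 t' t; lra.
have := xgetPex v (ex_intro _ t tproj); set t2 := xget v _.
case=> st2 min2.
have e : t2 = t.
  have h1 := min2 t ts; rewrite (sqdist_dec t2 t v) in h1.
  have h2 := kt t2 st2; have h3 := sqdist_ge0 t2 t.
  have h0 : sqdist t2 t = 0 by lra.
  apply/ffunP => i; have := psumr_eq0P _ h0 => /(_ _ i) /=.
  by move=> /(_ (fun i _ => sqr_ge0 _) isT) /eqP; rewrite sqrf_eq0 subr_eq0 => /eqP.
rewrite e sqdistC (sqdistC v) (sqdist_dec theta t v).
have := kt theta sth; have := sqdist_ge0 t v; lra.
Qed.

End Proj.

Section Cons.
Variables (R : realType) (K : nat) (p q : R).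
Hypotheses (HK : (2 <= K)%N) (Hq : 0 < q) (Hqp : q < p)
  (Hsum : p + (K - 1)%:R * q = 1).
Notation vec := {ffun 'I_K -> R}.
Local Ltac slra := have := Hq; have := Hqp; lra.
Local Ltac snra := have := Hq; have := Hqp; nra.

Lemma coord_le (a b : vec) d i : 0 <= d -> sqdist a b <= d ^+ 2 ->
  - d <= a i - b i <= d.
Proof.
move=> d0 h; have : (a i - b i) ^+ 2 <= d ^+ 2.
  apply: le_trans h; rewrite /sqdist (bigD1 i) //= lerDl sumr_ge0 // => j _.
  exact: sqr_ge0.
move=> h2; apply/andP; split; nra.
Qed.

Lemma hist_ge0 N (w : {ffun 'I_N -> 'I_K * 'I_K}) i : 0 <= hist R w i.
Proof. by rewrite /hist ffunE divr_ge0 ?ler0n. Qed.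

Lemma hist_sum N (w : {ffun 'I_N -> 'I_K * 'I_K}) : (1 <= N)%N -> \sum_i hist R w i = 1.
Proof.
move=> hN; rewrite /hist; under eq_bigr do rewrite ffunE card_sum.
rewrite -mulr_suml exchange_big /=.
rewrite (eq_bigr (fun _ => 1)).
  by rewrite sumr_const card_ord divff // pnatr_eq0 -lt0n.
move=> u _; rewrite (bigD1 (w u).2) //=; case: ((w u).2 == (w u).2) (eqxx (w u).2) => // _.
by rewrite big1 ?addr0 // => i; rewrite eq_sym => /negbTE ->.
Qed.

Lemma Pr_mono theta N (A B : pred {ffun 'I_N -> 'I_K * 'I_K}) : simplex theta ->
  (forall w, A w -> B w) -> Pr p q theta A <= Pr p q theta B.
Proof.
move=> hs h; rewrite /Pr [X in X <= _]big_mkcond [X in _ <= X]big_mkcond /=.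
apply: ler_sum => w _; case hA: (A w); first by rewrite h.
by case: (B w); rewrite ?lexx ?weight_ge0.
Qed.

Lemma consistent_of (est : vec -> vec) :
  (forall theta : vec, simplex theta -> forall eps : R, 0 < eps -> exists d : R, 0 < d /\
     forall phi : vec, (forall i, 0 <= phi i) -> \sum_i phi i = 1 ->
       sqdist (Inv p q phi) theta <= d ^+ 2 -> sqdist (est phi) theta <= eps ^+ 2) ->
  consistent p q est.
Proof.
move=> H theta sth eps delta he hdel.
have [d [d0 Hd]] := H theta sth eps he.
have hpq : 0 < p - q by slra.
set C := ((p - q) ^+ 2)^-1 * K%:R / (d ^+ 2 * delta).
exists (Num.Def.trunc C).+1 => N hN.
have hN1 : (1 <= N)%N by apply: leq_trans hN.
have hNC : C < N%:R.
  apply: lt_le_trans (truncnS_gt C) _; by rewrite ler_nat.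
have hN0 : 0 < N%:R :> R by rewrite ltr0n.
apply: le_trans (Pr_mono (B := fun w => d ^+ 2 < sqdist (Inv p q (hist R w)) theta) sth _) _.
  move=> w; apply: contraLR; rewrite -!leNgt => hw.
  have := Hd _ (@hist_ge0 N w) (hist_sum w hN1) hw.
  rewrite /dist2 -(ler_sqrt _ (exprn_ge0 2 (ltW he))) => h; apply: le_trans h _.
  by rewrite sqrtr_sqr ger0_norm // ltW.
apply: le_trans (Markov Hq Hqp (f := fun w : {ffun 'I_N -> 'I_K * 'I_K} => sqdist (Inv p q (hist R w)) theta) sth (exprn_gt0 2 d0) _) _.
  by move=> w; apply: sqdist_ge0.
rewrite ler_pdivrMr ?exprn_gt0 //.
apply: le_trans (mse_Inv Hq Hqp Hsum sth hN1) _.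
rewrite ler_pdivrMr //.
move: hNC; rewrite /C ltr_pdivrMr ?mulr_gt0 ?exprn_gt0 // => h.
have -> : delta * d ^+ 2 * N%:R = N%:R * (d ^+ 2 * delta) by ring.
exact: ltW.
Qed.


Lemma sum_le_const (F : 'I_K -> R) c : (forall i, F i <= c) -> \sum_i F i <= K%:R * c.
Proof.
move=> h; have -> : K%:R * c = \sum_(i < K) c by rewrite sumr_const card_ord mulr_natl.
by apply: ler_sum => i _; apply: h.
Qed.

Lemma small_d (k eps : R) : 1 <= k -> 0 < eps ->
  exists d, 0 < d /\ k * d <= 1 / 2 /\ 2 * (k + 1) * k * d <= eps.
Proof.
move=> hk he.
exists (Num.min (1 / (2 * k)) (eps / (2 * (k + 1) * k))).
have k0 : 0 < k by lra.
have a0 : 0 < 1 / (2 * k) by rewrite divr_gt0 // mulr_gt0.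
have b0 : 0 < eps / (2 * (k + 1) * k) by rewrite divr_gt0 // !mulr_gt0 //; lra.
split; first by rewrite lt_min a0 b0.
set d := Num.min _ _.
have m1 : d <= 1 / (2 * k) by rewrite /d ge_min lexx.
have m2 : d <= eps / (2 * (k + 1) * k) by rewrite /d ge_min lexx orbT.
split.
  rewrite mulrC -ler_pdivlMr //; apply: le_trans m1 _; rewrite le_eqVlt; apply/orP; left.
  by apply/eqP; field; apply/lt0r_neq0.
rewrite mulrC -ler_pdivlMr ?mulr_gt0 //; lra.
Qed.


Lemma InvN_cont (theta : vec) : simplex theta -> forall eps : R, 0 < eps -> exists d : R, 0 < d /\
     forall phi : vec, (forall i, 0 <= phi i) -> \sum_i phi i = 1 ->
       sqdist (Inv p q phi) theta <= d ^+ 2 -> sqdist (InvN p q phi) theta <= eps ^+ 2.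
Proof.
move=> sth eps he; set k : R := K%:R.
have hk : 1 <= k by rewrite /k ler1n; apply: leq_trans HK.
have [d [d0 [hd1 hd2]]] := small_d hk he.
exists d; split => // phi _ _ hv.
set v := Inv p q phi.
have hc i := coord_le i (ltW d0) hv.
have hm i : -d <= Num.max 0 (v i) - theta i <= d.
  have /andP[a b] := hc i; have /andP[t0 t1] := simplex_le1 i sth.
  case: (leP 0 (v i)) => h; apply/andP; split; lra.
set s := \sum_j Num.max 0 (v j).
have hs : -(k * d) <= s - 1 <= k * d.
  case: (sth) => _ h1.
  have e : s - 1 = \sum_j (Num.max 0 (v j) - theta j) by rewrite sumrB h1.
  rewrite e; apply/andP; split.
    have h : \sum_j -(Num.max 0 (v j) - theta j) <= k * d.
      by apply: sum_le_const => j; have /andP[a _] := hm j; lra.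
    rewrite sumrN in h; lra.
  by apply: sum_le_const => j; have /andP[] := hm j.
have s2 : 1 / 2 <= s by lra.
have s0 : s != 0 by apply/lt0r_neq0; lra.
rewrite /sqdist; apply: le_trans (sum_le_const (c := (2 * (k + 1) * d) ^+ 2) _) _.
  move=> i; rewrite ffunE -/v -/s.
  set y := _ / s - theta i.
  have ey : y * s = (Num.max 0 (v i) - theta i) - theta i * (s - 1) by rewrite /y; field.
  have /andP[a b] := hm i; have /andP[t0 t1] := simplex_le1 i sth.
  have /andP[c1 c2] := hs.
  have h1 : theta i * (s - 1) <= k * d by nra.
  have h2 : - (k * d) <= theta i * (s - 1) by nra.
  have h3 : y * s <= (k + 1) * d by lra.
  have h4 : - ((k + 1) * d) <= y * s by lra.
  have h5 : y <= 2 * (k + 1) * d by nra.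
  have h6 : - (2 * (k + 1) * d) <= y by nra.
  nra.
set e' := 2 * (k + 1) * d.
have e0 : 0 <= e' by rewrite /e'; nra.
have f1 : k * e' <= eps by have -> : k * e' = 2 * (k + 1) * k * d by rewrite /e'; ring.
have f2 : k * e' ^+ 2 <= (k * e') ^+ 2.
  rewrite -subr_ge0; have -> : (k * e') ^+ 2 - k * e' ^+ 2 = k * (k - 1) * e' ^+ 2 by ring.
  by rewrite !mulr_ge0 ?sqr_ge0 //; lra.
apply: le_trans f2 _; rewrite ler_sqr ?nnegrE //; nra.
Qed.


Lemma lin3 (a1 b1 a2 b2 a3 b3 : R) : 0 < a1 -> 0 < b1 -> 0 < a2 -> 0 < b2 -> 0 < a3 -> 0 < b3 ->
  exists d, 0 < d /\ a1 * d <= b1 /\ a2 * d <= b2 /\ a3 * d <= b3.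
Proof.
move=> ha1 hb1 ha2 hb2 ha3 hb3.
exists (Num.min (b1 / a1) (Num.min (b2 / a2) (b3 / a3))).
set d := Num.min _ _.
have m1 : d <= b1 / a1 by rewrite /d ge_min lexx.
have m2 : d <= b2 / a2 by rewrite /d !ge_min lexx orbT.
have m3 : d <= b3 / a3 by rewrite /d !ge_min lexx !orbT.
split; first by rewrite !lt_min !divr_gt0.
by split; [|split]; rewrite mulrC -ler_pdivlMr.
Qed.

Lemma foldr_min_le (s : seq R) a x : x \in s -> foldr Num.min a s <= x.
Proof.
elim: s => //= y s IH; rewrite inE => /orP[/eqP->|h]; first by rewrite ge_min lexx.
by rewrite ge_min (IH h) orbT.
Qed.

Lemma ctau_close (theta phi : vec) d tau : simplex theta -> (forall i, 0 <= phi i) ->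
  \sum_i phi i = 1 -> 0 <= d -> (forall i, -d <= phi i - pi_ p q theta i <= d) ->
  K%:R * d <= p / 2 -> (forall i, 0 < theta i -> tau <= phi i) -> (exists j, 0 < theta j) ->
  - (2 * K%:R * d / p) <= ctau q phi tau - 1 <= 2 * K%:R * d / p.
Proof.
move=> sth ph0 ph1 d0 hd hk htau [j0 hj0].
set M := [set i | phi i < tau].
have hM i : i \in M -> theta i = 0.
  rewrite inE => h; have t0 := sth.1 i; case: (ltP 0 (theta i)) => h2; last by lra.
  by have := htau i h2; rewrite leNgt h.
have mK : (#|M| <= K - 1)%N.
  have : (#|M| <= #|predC1 j0|)%N.
    apply: subset_leq_card; apply/fintype.subsetP => i hi.
    rewrite inE /=; apply/eqP => e; move: hi; rewrite e => /hM; lra.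
  by rewrite cardC1 card_ord subn1.
have m_le : #|M|%:R <= (K - 1)%:R :> R by rewrite ler_nat.
have hpq : 0 < p - q by slra.
set e := \sum_(i in M) (phi i - q).
have he1 : e <= #|M|%:R * d.
  rewrite /e [_ * d]mulr_natl -sumr_const; apply: ler_sum => i hi.
  by have := hd i; rewrite /pi_ hM // mul0r addr0 => /andP[].
have he2 : - (#|M|%:R * d) <= e.
  rewrite /e [_ * d]mulr_natl -sumr_const -sumrN; apply: ler_sum => i hi.
  by have := hd i; rewrite /pi_ hM // mul0r addr0 => /andP[].
have hMd : #|M|%:R * d <= K%:R * d.
  rewrite ler_wpM2r // ler_nat; apply: leq_trans mK _; exact: leq_subr.
have hsplit : \sum_(i | tau <= phi i) phi i = 1 - (#|M|%:R * q + e).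
  have := ph1; rewrite (bigID (mem M)) /= => h.
  have -> : \sum_(i | tau <= phi i) phi i = \sum_(i | i \notin M) phi i.
    by apply: eq_bigl => i; rewrite inE -leNgt.
  move: h; rewrite /e sumrB sumr_const -mulr_natl; lra.
have a0 : p <= 1 - #|M|%:R * q.
  rewrite -subr_ge0; have -> : 1 - #|M|%:R * q - p = ((K - 1)%:R - #|M|%:R) * q.
    by rewrite -{1}Hsum; ring.
  by rewrite mulr_ge0 ?subr_ge0 // ltW.
rewrite /ctau /mcount -/M hsplit.
set a := 1 - _ * q.
set D := 1 - _.
have hD : D = a - e by rewrite /D /a; ring.
have D2 : p / 2 <= D by rewrite hD /a; lra.
have D0 : D != 0 by apply/lt0r_neq0; slra.
set c := a / D.
have ec : (c - 1) * D = e by rewrite /c hD; field; rewrite -hD.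
set A := 2 * K%:R * d / p.
have pA : p * A = 2 * K%:R * d by rewrite /A; field; apply/lt0r_neq0; slra.
have A0 : 0 <= A by rewrite /A divr_ge0 // ?mulr_ge0 ?ler0n //; slra.
have p0 : 0 < p by slra.
apply/andP; split; nra.
Qed.


Lemma MLE_cont (theta : vec) : simplex theta -> forall eps : R, 0 < eps -> exists d : R, 0 < d /\
     forall phi : vec, (forall i, 0 <= phi i) -> \sum_i phi i = 1 ->
       sqdist (Inv p q phi) theta <= d ^+ 2 -> sqdist (MLEstar p q phi) theta <= eps ^+ 2.
Proof.
move=> sth eps he; set k : R := K%:R.
have hk : 1 <= k by rewrite /k ler1n; apply: leq_trans HK.
have hpq : 0 < p - q by slra.
have p0 : 0 < p by slra.
have p1 : p <= 1 by rewrite -Hsum lerDl mulr_ge0 ?ler0n // ltW.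
have [i0 hi0] : exists i, 0 < theta i.
  case: (pickP (fun i => 0 < theta i)) => [i hi|h]; first by exists i.
  exfalso; case: (sth) => t0 t1.
  have : \sum_i theta i = 0.
    apply: big1 => i _; move/negbT: (h i); rewrite -leNgt => h'.
    by apply/eqP; rewrite eq_le h' t0.
  by rewrite t1 => /eqP; rewrite oner_eq0.
have [jm [hjm hmin]] := exists_argmin (P := fun i => 0 < theta i) theta hi0.
set g := theta jm * (p - q).
have g0 : 0 < g by rewrite mulr_gt0.
have gle : g <= p - q.
  by have /andP[t0 t1] := simplex_le1 jm sth; rewrite /g; nra.
have q1 : 0 < k by lra.
have q2 : 0 < p / 2 by lra.
have q0 : 0 <= 2 * k / p by rewrite divr_ge0 //; lra.
have q3 : 0 < 1 + 2 * k / p by lra.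
have q4 : 0 < k * (2 * k / p + 1) / (p - q) by rewrite divr_gt0 // mulr_gt0 //; lra.
have [d [d0 [c1 [c2 c3]]]] := lin3 q1 q2 q3 g0 q4 he.
exists (d / (p - q)); split; first by rewrite divr_gt0.
move=> phi ph0 ph1 hv.
have sphi : simplex phi by split.
have hd i : -d <= phi i - pi_ p q theta i <= d.
  have /andP[a b] := coord_le i (ltW (divr_gt0 d0 hpq)) hv.
  have e : phi i - pi_ p q theta i = (p - q) * (Inv p q phi i - theta i).
    by rewrite /Inv ffunE /pi_; field; apply/lt0r_neq0.
  have hpd : d = (p - q) * (d / (p - q)) by field; apply/lt0r_neq0.
  rewrite e; apply/andP; split.
    by rewrite [X in - X <= _]hpd -mulrN ler_wpM2l // ltW.
  by rewrite [X in _ <= X]hpd ler_wpM2l // ltW.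
set A := 2 * k * d / p.
have eA : (1 + 2 * k / p) * d = d + A by rewrite /A; field; apply/lt0r_neq0.
have A1 : A <= 1 by rewrite /A ler_pdivrMr // mul1r; lra.
have A0 : 0 <= A by rewrite /A divr_ge0 // ?mulr_ge0 // ?ler0n; lra.
have [jP [hjP hminP]] := exists_argmin (P := fun i => 0 < theta i) phi hi0.
set tauP := phi jP.
have okP : tau_ok q phi tauP.
  have /andP[cl cu] := ctau_close sth ph0 ph1 (ltW d0) hd c1 hminP (ex_intro _ jm hjm).
  apply/forallP => i; apply/implyP => hi.
  move: cl cu; rewrite -/A; set c := ctau q phi tauP => cl cu.
  have L1 : q + g - d <= tauP.
    have /andP[a _] := hd jP; move: a; rewrite /pi_ /tauP => a.
    have : theta jm * (p - q) <= theta jP * (p - q) by rewrite ler_wpM2r ?hmin // ltW.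
    rewrite -/g; lra.
  have L2 : d + A <= g by rewrite -eA.
  have x0 : 0 <= phi i := ph0 i.
  have h1 : (1 - A) * (q + g - d) <= c * phi i by nra.
  have h2 : A * (q + g - d) <= A by nra.
  nra.
have taus : tau_star q phi <= tauP.
  rewrite /tau_star; apply: foldr_min_le; apply/mapP; exists jP => //.
  by rewrite mem_filter okP mem_enum.
set ts := tau_star q phi.
have hts i : 0 < theta i -> ts <= phi i by move=> h; apply: le_trans taus (hminP i h).
have /andP[cl cu] := ctau_close sth ph0 ph1 (ltW d0) hd c1 hts (ex_intro _ jm hjm).
move: cl cu; rewrite -/A; set c := ctau q phi ts => cl cu.
set B := (A + d) / (p - q).
have B0 : 0 <= B by rewrite /B divr_ge0 // ?ltW //; lra.
have hB i : (MLEstar p q phi i - theta i) ^+ 2 <= B ^+ 2.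
  rewrite /MLEstar ffunE -/ts -/c; case: ifP => h.
    have t0 : theta i = 0.
      have := sth.1 i; case: (ltP 0 (theta i)) => h2; last by lra.
      by have := hts i h2; rewrite leNgt h.
    by rewrite t0 subrr expr0n /= sqr_ge0.
  set y := _ - theta i.
  have ey : y * (p - q) = (c - 1) * phi i + (phi i - pi_ p q theta i).
    by rewrite /y /pi_; field; apply/lt0r_neq0.
  have /andP[a b] := hd i; have /andP[x0 x1] := simplex_le1 i sphi.
  have f1 : (c - 1) * phi i <= A by nra.
  have f2 : - A <= (c - 1) * phi i by nra.
  have g1 : y * (p - q) <= A + d by lra.
  have g2 : - (A + d) <= y * (p - q) by lra.
  have eB : B * (p - q) = A + d by rewrite /B; field; apply/lt0r_neq0.
  have y1 : y <= B by nra.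
  have y2 : - B <= y by nra.
  nra.
rewrite /sqdist; apply: le_trans (sum_le_const hB) _; rewrite -/k.
have f1 : k * B <= eps.
  have -> : k * B = k * (2 * k / p + 1) / (p - q) * d.
    by rewrite /B /A; field; apply/andP; split; apply/lt0r_neq0.
  exact: c3.
have f2 : k * B ^+ 2 <= (k * B) ^+ 2.
  rewrite -subr_ge0; have -> : (k * B) ^+ 2 - k * B ^+ 2 = k * (k - 1) * B ^+ 2 by ring.
  by apply: mulr_ge0; [apply: mulr_ge0; lra | exact: sqr_ge0].
apply: le_trans f2 _; rewrite ler_sqr ?nnegrE //; nra.
Qed.

End Cons.

Unset Implicit Arguments.
Set Strict Implicit.

Theorem theorem9 (R : realType) (K : nat) (p q : R) :
  (2 <= K)%N -> 0 < q -> q < p -> p + (K - 1)%:R * q = 1 ->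
  [/\ @consistent R K p q (@Inv R K p q), @consistent R K p q (@InvP R K p q),
      @consistent R K p q (@InvN R K p q) & @consistent R K p q (@MLEstar R K p q)] /\
  (@mse_bound R K p q (@Inv R K p q) /\ @mse_bound R K p q (@InvP R K p q)).
Proof.
move=> HK Hq Hqp Hsum.
have HK0 : (0 < K)%N by apply: leq_trans HK.
split; [split|split].
- apply: consistent_of => // theta sth eps he; exists eps; split => // phi _ _ h; exact: h.
- apply: consistent_of => // theta sth eps he; exists eps; split => // phi _ _ h.
  by rewrite /InvP; apply: le_trans (proj_contract HK0 _ sth) h.
- by apply: consistent_of => //; apply: InvN_cont.
- by apply: consistent_of => //; apply: MLE_cont.
- exists ((p - q) ^+ 2)^-1 => theta sth N hN; exact: mse_Inv.
- exists ((p - q) ^+ 2)^-1 => theta sth N hN.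
  apply: le_trans (mse_Inv Hq Hqp Hsum sth hN).
  apply: Exp_le => // w; rewrite /InvP; exact: proj_contract.
Qed.
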